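(* Let $G$ be a finite group. For every proper subgroup $H\subsetneq G$, the set $f_{G-H}=\bigcup_{g\in G-H}\{\{a,ag\}\mid a\in G\}$ is the set of bases of a rank-$2$ matroid on the ground set $G$ (which is invariant under left multiplication). Conversely, every rank-$2$ matroid on the ground set $G$ whose set of bases is invariant under left multiplication by $G$ has set of bases $f_{G-H}$ for a unique proper subgroup $H$ of $G$. Consequently, two-dimensional tropical subrepresentations of the boolean regular representation $\mathbb{B}[G]$ correspond bijectively to proper subgroups of $G$.
   Context: $G$ acts on $\binom{G}{2}$ (2-element subsets of $G$) by $x\cdot\{a,b\}=\{xa,xb\}$. For $g\in G$, $f_g=\{\{a,ag\}\mid a\in G\}$ ($f_e=\emptyset$), and for $S\subseteq G$, $f_S=\bigcup_{g\in S}f_g$. Over the boolean semifield $\mathbb{B}=\{0,1\}$, $\mathbb{B}[G]$ is the free $\mathbb{B}$-module with basis $\{\mathbf{e}_g\}_{g\in G}$ and $G$ acting by $x\cdot\mathbf{e}_a=\mathbf{e}_{xa}$; its $d$-dimensional tropical subrepresentations are equivalent to rank-$d$ matroids on the ground set $G$ whose set of bases is invariant under the induced action of $G$ on $\binom{G}{d}$. *)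

(* Defs.v *)
From mathcomp Require Import all_boot all_order all_fingroup.
Set Implicit Arguments. Unset Strict Implicit. Unset Printing Implicit Defensive.
Local Open Scope group_scope.

Definition basis_exchange (T : finType) (Bs : {set {set T}}) : Prop :=
  forall B1 B2, B1 \in Bs -> B2 \in Bs ->
    forall x, x \in B1 :\: B2 ->
      exists2 y, y \in B2 :\: B1 & (B1 :\ x) :|: [set y] \in Bs.

Definition is_matroid_bases (T : finType) (d : nat) (Bs : {set {set T}}) : Prop :=
  [/\ Bs != set0, (forall B, B \in Bs -> #|B| = d) & basis_exchange Bs].

Definition left_invariant (gT : finGroupType) (Bs : {set {set gT}}) : Prop :=
  forall (x : gT) (B : {set gT}), (mulg x @: B \in Bs) = (B \in Bs).

(* f_g = {{a, a g} | a in G}   (empty when g = 1, since then {a,a} is not 2-element) *)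
Definition f_elt (gT : finGroupType) (g : gT) : {set {set gT}} :=
  if g == 1 then set0 else [set [set a; a * g] | a : gT].

Definition f_set (gT : finGroupType) (S : {set gT}) : {set {set gT}} :=
  \bigcup_(g in S) f_elt g.

(* Main.v *)
Require Import Defs.
From mathcomp Require Import all_boot all_order all_fingroup.
Set Implicit Arguments. Unset Strict Implicit. Unset Printing Implicit Defensive.
Local Open Scope group_scope.

Section Aux.
Variable gT : finGroupType.
Implicit Types (K : {group gT}) (u v a g : gT) (B : {set gT}).

Lemma pair_img x u v : mulg x @: [set u; v] = [set x * u; x * v].
Proof. by rewrite imsetU1 imset_set1. Qed.

Lemma memfK K B : B \in f_set (~: (K : {set gT})) <->
  exists a g, g \notin K /\ B = [set a; a * g].
Proof.
split.
  move=> /bigcupP [g]; rewrite inE => gK; rewrite /f_elt.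
  case: eqP => _; first by rewrite in_set0.
  by move=> /imsetP [a _ ->]; exists a, g.
move=> [a [g [gK ->]]]; apply/bigcupP; exists g; first by rewrite inE.
have g1 : g != 1 by apply: contraNneq gK => ->; exact: group1.
rewrite /f_elt (negbTE g1); apply/imsetP; exists a => //.
Qed.

Lemma neq_mul a g : g != 1 -> a != a * g.
Proof.
move=> g1; apply/eqP => E; move/eqP: g1; apply.
by apply: (@mulgI _ a); rewrite mulg1 -E.
Qed.

Lemma card_fK K B : B \in f_set (~: (K : {set gT})) -> #|B| = 2.
Proof.
move=> /memfK [a [g [gK ->]]]; rewrite cards2 neq_mul //.
by apply: contraNneq gK => ->; exact: group1.
Qed.

Lemma pairK K u v : ([set u; v] \in f_set (~: (K : {set gT}))) = (u^-1 * v \notin K).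
Proof.
apply/idP/idP.
  move=> H; have uv : u != v.
    by apply/negP => /eqP E; move: (card_fK H); rewrite E setUid cards1.
  move: H => /memfK [a [g [gK E]]].
  have : u \in [set a; a * g] by rewrite -E set21.
  have : v \in [set a; a * g] by rewrite -E set22.
  move=> /set2P [] Ev /set2P [] Eu; rewrite ?Eu ?Ev ?eqxx // in uv *.
    by rewrite invMg -mulgA mulVg mulg1 groupV.
  by rewrite mulKg.
move=> H; apply/memfK; exists u, (u^-1 * v); split => //.
by rewrite mulKVg.
Qed.

Lemma fK_inv K x B : B \in f_set (~: (K : {set gT})) ->
  mulg x @: B \in f_set (~: (K : {set gT})).
Proof.
move=> /memfK [a [g [gK ->]]]; rewrite pair_img pairK.
by rewrite invMg -mulgA !mulKg.
Qed.

Lemma inv_from (Bs : {set {set gT}}) :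
  (forall x B, B \in Bs -> mulg x @: B \in Bs) -> left_invariant Bs.
Proof.
move=> H x B; apply/idP/idP; last exact: H.
move=> /(H x^-1); rewrite -imset_comp.
have -> : [set (mulg x^-1 \o mulg x) y | y in B] = B.
  by rewrite (eq_imset (g := id)) ?imset_id // => y /=; rewrite mulKg.
by [].
Qed.

Lemma part1 K : K \proper [set: gT] ->
  is_matroid_bases 2 (f_set (~: (K : {set gT}))) /\
  left_invariant (f_set (~: (K : {set gT}))).
Proof.
move=> pK; split; last by apply: inv_from => x B; apply: fK_inv.
split.
- move: pK => /properP [_ [g _ gK]].
  apply/set0Pn; exists [set 1; g]; by rewrite pairK invg1 mul1g.
- by move=> B; apply: card_fK.
move=> B1 B2 H1 H2 x.
move: (card_fK H1) (card_fK H2) => /eqP/cards2P [p [q [pq E1]]] /eqP/cards2P [c [d [cd E2]]].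
rewrite E1 E2 in H1 H2 *; clear E1 E2 B1 B2.
rewrite pairK in H1; rewrite pairK in H2.
wlog -> : p q pq H1 / x = p.
  move=> W xin; move: (xin); rewrite inE => /andP [xB2 /set2P [] xe].
    exact: (W p q pq H1 xe xin).
  have E : [set p; q] = [set q; p] by rewrite setUC.
  rewrite E in xin *; apply: (W q p _ _ xe xin).
  - by rewrite eq_sym.
  - by rewrite -groupV invMg invgK.
rewrite inE => /andP [pB2 _].
have -> : [set p; q] :\ p = [set q].
  apply/setP => z; rewrite !inE; case: (z =P p) => [->|] /=.
    by rewrite (negbTE pq).
  by move=> zp; case: (z =P q) => //= ->; apply/esym/eqP.
have key : forall y, y \in [set c; d] -> q^-1 * y \notin K ->
  exists2 y0, y0 \in [set c; d] :\: [set p; q] & [set q] :|: [set y0] \in f_set (~: (K : {set gT})).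
  move=> y yB qy; apply: (ex_intro2 _ _ y); last first.
    by rewrite (pairK K q y).
  rewrite inE yB andbT; apply/set2P => -[] E.
    by rewrite -E yB in pB2.
  by rewrite E mulVg group1 in qy.
case: (boolP (q^-1 * c \in K)) => qc; last exact: (key c (set21 _ _) qc).
apply: (key d (set22 _ _)); apply: contra H2 => qd.
by rewrite -(mulKVg q c) invMg -mulgA groupM // groupV.
Qed.


Lemma part2 (Bs : {set {set gT}}) : is_matroid_bases 2 Bs -> left_invariant Bs ->
     exists H : {group gT},
       [/\ H \proper [set: gT], Bs = f_set (~: (H : {set gT})) &
           forall H' : {group gT}, H' \proper [set: gT] ->
             Bs = f_set (~: (H' : {set gT})) -> H' :=: H].
Proof.
move=> [ne card ex] inv.
pose Hs := [set g | [set 1; g] \notin Bs].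
have Lpar : forall u v, ([set u; v] \in Bs) = (u^-1 * v \notin Hs).
  move=> u v; rewrite inE negbK -(inv u^-1 [set u; v]) pair_img mulVg //.
have H1 : 1 \in Hs by rewrite inE setUid; apply/negP => /card; rewrite cards1.
have Hbasis : forall y, exists w, [set y; w] \in Bs.
  move=> y; move: ne => /set0Pn [B BB]; move/eqP: (card B BB) => /cards2P [p [q [_ E]]].
  by exists (y * (p^-1 * q)); rewrite Lpar mulKg -Lpar -E.
have tri : forall x y z w, [set x; z] \in Bs -> y != x -> y != z -> [set y; w] \in Bs ->
    ([set y; x] \in Bs) || ([set y; z] \in Bs).
  move=> x y z w Bxz yx yz Byw.
  case: (w =P x) => [<-|wx]; first by rewrite Byw.
  case: (w =P z) => [<-|wz]; first by rewrite Byw orbT.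
  have yw : y != w.
    by apply/negP => /eqP E; move: (card _ Byw); rewrite E setUid cards1.
  have wB : w \in [set y; w] :\: [set x; z].
    by rewrite !inE eqxx orbT andbT (introF eqP wx) (introF eqP wz).
  have [u] := ex _ _ Byw Bxz w wB.
  have -> : [set y; w] :\ w = [set y].
    apply/setP => t; rewrite !inE; case: (t =P w) => [->|] /=.
      by rewrite eq_sym (negbTE yw).
    by move=> tw; case: (t =P y) => //= ->.
  rewrite !inE => /andP [_ /orP [] /eqP ->] h.
    by rewrite h.
  by rewrite h orbT.
have gs : group_set Hs.
  apply/group_setP; split => // g h gH hH.
  case: (g =P 1) => [->|g1]; first by rewrite mul1g.
  case: (h =P 1) => [->|h1]; first by rewrite mulg1.
  rewrite inE; apply/negP => B1gh.
  have [w Bw] := Hbasis g.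
  have g1' : g != 1 by apply/eqP.
  have ggh : g != g * h.
    apply/eqP => E; apply: h1; apply: (mulgI g); by rewrite mulg1 -E.
  case/orP: (tri 1 g (g * h) w B1gh g1' ggh Bw).
  - by rewrite setUC; move: gH; rewrite inE => /negbTE ->.
  - by rewrite Lpar mulKg hH.
exists (Group gs); split.
- rewrite properT; apply/eqP => E.
  have [w Bw] := Hbasis 1.
  move/setP/(_ (1^-1 * w)): E; rewrite in_setT => E.
  by move: Bw; rewrite Lpar; move: E => /= ->.
- apply/setP => B; case: (boolP (#|B| == 2)) => [/cards2P [u [v [_ ->]]]|nc].
    by rewrite Lpar pairK.
  have -> : (B \in Bs) = false.
    by apply/negP => /card /eqP; rewrite (negbTE nc).
  apply/esym/negP => /card_fK /eqP; by rewrite (negbTE nc).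
move=> H' _ E; apply/setP => g.
by rewrite /= inE E pairK invg1 mul1g negbK.
Qed.

End Aux.

Theorem mainTheorem5 (gT : finGroupType) :
  (forall H : {group gT}, H \proper [set: gT] ->
     is_matroid_bases 2 (f_set (~: (H : {set gT}))) /\
     left_invariant (f_set (~: (H : {set gT}))))
  /\
  (forall Bs : {set {set gT}}, is_matroid_bases 2 Bs -> left_invariant Bs ->
     exists H : {group gT},
       [/\ H \proper [set: gT], Bs = f_set (~: (H : {set gT})) &
           forall H' : {group gT}, H' \proper [set: gT] ->
             Bs = f_set (~: (H' : {set gT})) -> H' :=: H]).
Proof.
split; [exact: part1 | exact: part2].
Qed.
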